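(* Consider one iteration of the $r$-cGA (without frequency borders) on \textit{G}-OneMax with current frequencies $p^{(t)}_{i,j}$, $(i,j)\in\{1,\dots,n\}\times\{0,\dots,r-1\}$, and let $x,y$ be the two strings sampled in this iteration. Fix $i\in\{1,\dots,n\}$ and let $D_i=\sum_{j\ne i}x_j-\sum_{j\ne i}y_j$. Then, for sufficiently large $n$, \[\Pr[D_i=0]\ge \frac{4}{9\left(2(r-1)\sqrt{3n}+1\right)}.\]
   Context: Let $n\ge 1$, $r\ge 2$ be integers and $K>0$. \textit{G}-OneMax$(x)=\sum_{i=1}^n x_i$ for $x\in\{0,\dots,r-1\}^n$. The $r$-cGA with parameter $K$ maintains frequencies $p^{(t)}_{i,j}$ (each row a probability distribution over $\{0,\dots,r-1\}$), initially $1/r$. In iteration $t$ it samples two strings $x,y$ independently, each position $i$ of each string taking value $j$ with probability $p^{(t)}_{i,j}$ independently of other positions; if $f(x)<f(y)$ they are swapped; then $p^{(t+1)}_{i,j}=p^{(t)}_{i,j}+\frac1K(\mathbf 1[x_i=j]-\mathbf 1[y_i=j])$. *)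

(* Defs.v *)
From HB Require Import structures.
From mathcomp Require Import all_boot all_order all_algebra.
Set Implicit Arguments. Unset Strict Implicit. Unset Printing Implicit Defensive.
Import Order.TTheory GRing.Theory Num.Theory.
Local Open Scope ring_scope.

(* Positions are 'I_n (i.e. {0..n-1} instead of {1..n}), values are 'I_r.
   A string is a finite function {ffun 'I_n -> 'I_r}. *)

Definition is_freq (R : numDomainType) (n r : nat) (p : 'I_n -> 'I_r -> R) : Prop :=
  (forall i j, 0 <= p i j) /\ (forall i, \sum_(j < r) p i j = 1).

Definition sample_prob (R : numDomainType) (n r : nat) (p : 'I_n -> 'I_r -> R)
    (x : {ffun 'I_n -> 'I_r}) : R :=
  \prod_(j < n) p j (x j).

Definition gom_without (n r : nat) (x : {ffun 'I_n -> 'I_r}) (i : 'I_n) : nat :=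
  (\sum_(j < n | j != i) (x j : nat))%N.

Definition prob_Di_zero (R : numDomainType) (n r : nat) (p : 'I_n -> 'I_r -> R)
    (i : 'I_n) : R :=
  \sum_(x : {ffun 'I_n -> 'I_r}) \sum_(y : {ffun 'I_n -> 'I_r})
     (if gom_without x i == gom_without y i
      then sample_prob p x * sample_prob p y else 0).

(* Main.v *)
Require Import Defs.
From HB Require Import structures.
From mathcomp Require Import all_boot all_order all_algebra.
From mathcomp Require Import zify ring lra.
Import Order.TTheory GRing.Theory Num.Theory.
Local Open Scope ring_scope.

Lemma sp_ge0 (R : rcfType) n r (p : 'I_n -> 'I_r -> R) x :
  is_freq p -> 0 <= sample_prob p x.
Proof. by move=> [H1 _]; apply: prodr_ge0 => j _. Qed.

Lemma sp_sum1 (R : rcfType) n r (p : 'I_n -> 'I_r -> R) :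
  is_freq p -> \sum_x sample_prob p x = 1.
Proof.
move=> [_ H2]; rewrite /sample_prob -(bigA_distr_bigA (fun j k => p j k)).
by rewrite big1 // => j _; rewrite H2.
Qed.

Arguments sp_ge0 {R n r p} x.
Arguments sp_sum1 {R n r p}.

Lemma sum_by_S (R : rcfType) (X : finType) (g : X -> R) (f : nat -> R)
  (S : X -> nat) B : (forall x, (S x < B)%N) ->
  \sum_x g x * f (S x) = \sum_(k < B) (\sum_x g x * (S x == k)%:R) * f k.
Proof.
move=> HB.
under [RHS]eq_bigr do rewrite mulr_suml.
rewrite exchange_big /=; apply: eq_bigr => x _.
rewrite (bigD1 (Ordinal (HB x))) //= eqxx mulr1 big1 ?addr0 // => k Hk.
have -> : (S x == k) = false.
  by apply/negbTE; apply: contra Hk => /eqP e; apply/eqP/val_inj.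
by rewrite mulr0 mul0r.
Qed.

Lemma count_int A m B :
  (\sum_(l < B) ((A <= l) && (l <= A + m)) : nat)%N = (minn B (A+m+1) - A)%N.
Proof.
elim: B => [|B IH]; first by rewrite big_ord0 min0n.
rewrite big_ord_recr /= IH.
case: (boolP ((A <= B) && (B <= A + m)))%N => /= H; lia.
Qed.

Lemma isqrt_ex M : exists T, (T * T <= M < T.+1 * T.+1)%N.
Proof.
elim: M => [|M [T HT]]; first by exists 0%N.
case: (ltnP M.+1 (T.+1 * T.+1)) => H.
  exists T; lia.
exists T.+1; nia.
Qed.
Definition Wp (R : rcfType) n r (p : 'I_n -> 'I_r -> R)
  (xy : {ffun 'I_n -> 'I_r} * {ffun 'I_n -> 'I_r}) :=
  sample_prob p xy.1 * sample_prob p xy.2.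

Definition aj (R : rcfType) n r (j : 'I_n)
  (xy : {ffun 'I_n -> 'I_r} * {ffun 'I_n -> 'I_r}) : R :=
  ((xy.1 j : nat)%:R - (xy.2 j : nat)%:R).

Definition swp n r (j : 'I_n) (xy : {ffun 'I_n -> 'I_r} * {ffun 'I_n -> 'I_r}) :=
  ([ffun l => if l == j then xy.2 l else xy.1 l],
   [ffun l => if l == j then xy.1 l else xy.2 l]).

Arguments Wp {R n r} p xy.
Arguments aj R {n r} j xy.
Arguments swp {n r} j xy.

Lemma swpK n r (j : 'I_n) : involutive (@swp n r j).
Proof.
case=> x y; rewrite /swp /=; congr pair; apply/ffunP => l; rewrite !ffunE;
by case: (l == j).
Qed.

Lemma Wp_swp (R : rcfType) n r (p : 'I_n -> 'I_r -> R) j xy :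
  Wp p (swp j xy) = Wp p xy.
Proof.
rewrite /Wp /sample_prob -!big_split /=; apply: eq_bigr => l _.
rewrite !ffunE; case: (l == j) => //; exact: mulrC.
Qed.

Lemma cross0 (R : rcfType) n r (p : 'I_n -> 'I_r -> R) j k : j != k ->
  \sum_xy Wp p xy * (aj R j xy * aj R k xy) = 0.
Proof.
move=> Hjk.
set s := \sum_xy _.
have : s = - s.
  rewrite {1}/s (reindex_inj (can_inj (@swpK n r j))) /= -sumrN.
  apply: eq_bigr => xy _; rewrite Wp_swp /aj /swp /= !ffunE eqxx.
  rewrite eq_sym (negbTE Hjk); ring.
move=> H; lra.
Qed.

Lemma EDsq (R : rcfType) n r (p : 'I_n -> 'I_r -> R) (i : 'I_n) : is_freq p ->
  \sum_xy Wp p xy * (\sum_(j < n | j != i) aj R j xy) ^+ 2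
    <= n%:R * (r - 1)%:R ^+ 2.
Proof.
move=> Hp.
have W0 xy : 0 <= Wp p xy by rewrite /Wp mulr_ge0 // sp_ge0.
have W1 : \sum_xy Wp p xy = 1.
  by rewrite /Wp -(pair_bigA _ (fun x y => sample_prob p x * sample_prob p y)) /=
     -(sp_sum1 Hp) ; apply: eq_bigr => x _; rewrite -mulr_sumr sp_sum1 // mulr1.
have E xy : Wp p xy * (\sum_(j < n | j != i) aj R j xy) ^+ 2 =
   \sum_(j < n | j != i) \sum_(k < n | k != i) Wp p xy * (aj R j xy * aj R k xy).
  rewrite expr2 mulr_suml mulr_sumr; apply: eq_bigr => j _.
  rewrite mulr_sumr mulr_sumr; apply: eq_bigr => k _; ring.
rewrite (eq_bigr _ (fun xy _ => E xy)) exchange_big /=.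
under eq_bigr do rewrite exchange_big /=.
have diag j : j != i -> \sum_(k < n | k != i) \sum_xy Wp p xy * (aj R j xy * aj R k xy)
   = \sum_xy Wp p xy * (aj R j xy * aj R j xy).
  move=> Hj; rewrite (bigD1 j) //= [X in _ + X]big1 ?addr0 // => k /andP [_ Hk].
  by apply: cross0; rewrite eq_sym.
rewrite (eq_bigr _ diag).
have bnd j : \sum_xy Wp p xy * (aj R j xy * aj R j xy) <= (r - 1)%:R ^+ 2.
  rewrite -[X in _ <= X]mul1r -W1 mulr_suml; apply: ler_sum => xy _.
  apply: ler_wpM2l => //.
  have h1 : ((xy.1 j : nat)%:R <= (r - 1)%:R :> R).
    by rewrite ler_nat; have := ltn_ord (xy.1 j); lia.
  have h2 : ((xy.2 j : nat)%:R <= (r - 1)%:R :> R).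
    by rewrite ler_nat; have := ltn_ord (xy.2 j); lia.
  have h3 : (0 <= (xy.1 j : nat)%:R :> R) by [].
  have h4 : (0 <= (xy.2 j : nat)%:R :> R) by [].
  rewrite /aj; nra.
apply: (le_trans (ler_sum _ (fun j _ => bnd j))).
rewrite big_mkcond /=.
apply: (le_trans (y := \sum_(j < n) (r - 1)%:R ^+ 2 : R)).
  apply: ler_sum => j _; case: ifP => // _; exact: sqr_ge0.
by rewrite sumr_const card_ord mulr_natl.
Qed.

Lemma far_sq (R : rcfType) (a b T : nat) :
  ~~ ((a - b <= T) && (b - a <= T))%N -> (T.+1%:R) ^+ 2 <= (a%:R - b%:R : R) ^+ 2.
Proof.
move=> H.
have [h|h] : (T < a - b)%N \/ (T < b - a)%N.
  case: (leqP (a - b) T) H => [h1 /= | h1 _]; last by left.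
  by rewrite -ltnNge; right.
  have hab : (b <= a)%N by apply: ltnW; rewrite -subn_gt0 (leq_ltn_trans _ h).
  rewrite -natrB // -!natrX ler_nat.
  by apply: leq_mul.
have hab : (a <= b)%N by apply: ltnW; rewrite -subn_gt0 (leq_ltn_trans _ h).
rewrite -opprB sqrrN -natrB // -!natrX ler_nat.
by apply: leq_mul.
Qed.

Theorem lemma3 (R : rcfType) (r : nat) (hr : (2 <= r)%N) :
  exists N : nat, forall n : nat, (N <= n)%N ->
  forall (p : 'I_n -> 'I_r -> R), is_freq p ->
  forall i : 'I_n,
    4 / (9 * (2 * (r - 1)%:R * Num.sqrt (3 * n%:R) + 1)) <= prob_Di_zero p i.
Proof.
exists 0%N => n _ p Hp i.
set S := fun x : {ffun 'I_n -> 'I_r} => gom_without x i.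
have n_gt0 : (0 < n)%N by apply: leq_ltn_trans (ltn_ord i).
have HS x : (S x < n * r)%N.
  rewrite /S /gom_without big_mkcond /=.
  apply: (@leq_ltn_trans (\sum_(j < n) r.-1)).
    apply: leq_sum => j _; case: ifP => // _.
    by rewrite -ltnS prednK ?ltn_ord //; apply: leq_trans hr.
  rewrite sum_nat_const card_ord ltn_mul2l n_gt0 /=.
  by rewrite prednK //; apply: leq_trans hr.
set q := fun k : nat => \sum_x sample_prob p x * (S x == k)%:R.
have Hprob : prob_Di_zero p i = \sum_(k < n * r) q k * q k.
  rewrite /prob_Di_zero.
  transitivity (\sum_x sample_prob p x * q (S x)).
    apply: eq_bigr => x _; rewrite /q mulr_sumr; apply: eq_bigr => y _.
    rewrite /S eq_sym; case: ifP => _; by rewrite ?mulr1 ?mulr0 ?mulrA.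
  exact: (@sum_by_S R _ _ q S (n * r)%N HS).
have [T HT] := isqrt_ex (3 * n * (r - 1) ^ 2).
set c := fun k l : nat => ((k - l <= T) && (l - k <= T))%N.
have csym k l : c k l = c l k by rewrite /c andbC.
set Q := \sum_(k < n * r) q k * q k.
have q0 k : 0 <= q k.
  by apply: sumr_ge0 => x _; apply: mulr_ge0; [exact: sp_ge0 | exact: ler0n].
set PT := \sum_x \sum_y sample_prob p x * sample_prob p y * (c (S x) (S y))%:R.
have Hpt1 : PT = \sum_(k < n * r) q k * \sum_(l < n * r) q l * (c k l)%:R.
  transitivity (\sum_x sample_prob p x * (\sum_y sample_prob p y * (c (S x) (S y))%:R)).
    by apply: eq_bigr => x _; rewrite mulr_sumr; apply: eq_bigr => y _; rewrite mulrA.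
  transitivity (\sum_x sample_prob p x * (\sum_(l < n * r) q l * (c (S x) l)%:R)).
    apply: eq_bigr => x _; congr (_ * _).
    exact: (@sum_by_S R _ _ (fun l => (c (S x) l)%:R) S (n * r)%N HS).
  exact: (@sum_by_S R _ _ (fun k => \sum_(l < n * r) q l * (c k l)%:R) S (n * r)%N HS).
clearbody q.
have Hcnt k : \sum_(l < n * r) (c k l)%:R <= (2 * T + 1)%:R :> R.
  rewrite -natr_sum ler_nat.
  apply: (@leq_trans (\sum_(l < n * r) ((k - T <= l) && (l <= k - T + 2 * T)) : nat)%N).
    apply: leq_sum => l _; case H: (c k l) => //=.
    move: H; rewrite /c => /andP [H1 H2].
    have -> : ((k - T <= l) && (l <= k - T + 2 * T))%N = true.
      apply/andP; split; lia.
    by [].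
  rewrite count_int; lia.
have Hpt2 : PT <= (2 * T + 1)%:R * Q.
  rewrite Hpt1.
  apply: (@le_trans _ _ (\sum_(k < n * r) \sum_(l < n * r)
      (q k * q k * (c k l)%:R + q l * q l * (c l k)%:R) / 2)).
    apply: ler_sum => k _; rewrite mulr_sumr; apply: ler_sum => l _.
    rewrite csym; case: (c l k) => /=; last by rewrite !mulr0 addr0 mul0r.
    rewrite !mulr1; move: (q k) (q l) => a b; have h := sqr_ge0 (a - b); rewrite ler_pdivlMr //; move: h; rewrite expr2; nra.
  set A := \sum_(k < n * r) \sum_(l < n * r) q k * q k * (c k l)%:R.
  have AX : A = \sum_(k < n * r) \sum_(l < n * r) q l * q l * (c l k)%:R.
    by rewrite /A exchange_big.
  have -> : \sum_(k < n * r) \sum_(l < n * r)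
      (q k * q k * (c k l)%:R + q l * q l * (c l k)%:R) / 2 = (A + A) / 2.
    rewrite {2}AX /A -big_split mulr_suml; apply: eq_bigr => k _ /=.
    by rewrite -big_split mulr_suml.
  have -> : (A + A) / 2 = A by lra.
  rewrite /A.
  rewrite /Q mulr_sumr; apply: ler_sum => k _.
  rewrite -mulr_sumr mulrC; apply: ler_wpM2r; first by apply: mulr_ge0.
  exact: Hcnt.
have W1 : \sum_xy Wp p xy = 1.
  by rewrite /Wp -(pair_bigA _ (fun x y => sample_prob p x * sample_prob p y)) /=
     -(sp_sum1 Hp) ; apply: eq_bigr => x _; rewrite -mulr_sumr sp_sum1 // mulr1.
set NT := \sum_xy Wp p xy * (~~ c (S xy.1) (S xy.2))%:R.
have Hsum : PT + NT = 1.
  rewrite -W1 /PT (pair_bigA _ (fun x y => sample_prob p x * sample_prob p y * (c (S x) (S y))%:R)) /=.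
  rewrite /NT -big_split /=; apply: eq_bigr => xy _; rewrite /Wp.
  by case: (c _ _) => /=; rewrite ?mulr1 ?mulr0 ?addr0 ?add0r.
have NT0 : 0 <= NT.
  apply: sumr_ge0 => xy _; apply: mulr_ge0; last exact: ler0n.
  by rewrite /Wp mulr_ge0 // sp_ge0.
have HNT : NT * (T.+1%:R) ^+ 2 <= n%:R * (r - 1)%:R ^+ 2.
  apply: le_trans (@EDsq R n r p i Hp).
  rewrite /NT mulr_suml; apply: ler_sum => xy _.
  rewrite -mulrA; apply: ler_wpM2l; first by rewrite /Wp mulr_ge0 // sp_ge0.
  have -> : \sum_(j < n | j != i) aj R j xy = (S xy.1)%:R - (S xy.2)%:R.
    by rewrite /aj sumrB /S /gom_without !natr_sum.
  case H: (c (S xy.1) (S xy.2)) => /=.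
    by rewrite mul0r sqr_ge0.
  by rewrite mul1r; apply: far_sq; apply/negbT; exact: H.
have Hnat : 3 * (n%:R * (r - 1)%:R ^+ 2) < (T.+1%:R) ^+ 2 :> R.
  rewrite -!natrX -!natrM ltr_nat.
  by case/andP: HT => _ h; rewrite mulnA -[(T.+1 ^ 2)%N]mulnn.
have HPT : 2 / 3 <= PT.
  have u0 : 0 < (T.+1%:R) ^+ 2 :> R by rewrite exprn_gt0 // ltr0n.
  move: Hsum HNT Hnat u0 NT0.
  move: ((T.+1%:R) ^+ 2) (n%:R * (r - 1)%:R ^+ 2) => u m.
  move=> Hs Hn Hm Hu H0. nra.
have hT : (T%:R : R) <= (r - 1)%:R * Num.sqrt (3 * n%:R).
  rewrite -ler_sqr ?nnegrE ?mulr_ge0 ?sqrtr_ge0 ?ler0n //.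
  rewrite exprMn sqr_sqrtr; last by rewrite mulr_ge0 ?ler0n.
  rewrite -!natrX -!natrM ler_nat.
  by case/andP: HT => h _; rewrite mulnC -mulnn.
rewrite Hprob -/Q.
have Q0 : 0 <= Q by apply: sumr_ge0 => k _; apply: mulr_ge0.
rewrite -mulrA.
move: hT Hpt2 HPT Q0 (ler0n R T); rewrite natrD natrM.
move: ((r - 1)%:R * Num.sqrt (3 * n%:R)) (T%:R : R) => v t.
move=> h1 h2 h3 h4 t0.
rewrite ler_pdivrMr; last by nra.
nra.
Qed.
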